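(* For all $c,c'\in\mathbb{Q}$ and all integers $n,m\ge1$, $\partial_n^{(c)}\widehat{\partial}_m^{(c')}=\widehat{\partial}_m^{(c')}\partial_n^{(c)}$.
   Context: Let $\mathfrak{H}=\mathbb{Q}\langle x,y\rangle$, $z=x+y$; products of operators denote composition, $\mathrm{ad}(A)(B)=AB-BA$. $H$ is the $\mathbb{Q}$-linear map with $H(w)=\deg(w)w$ for words $w$. $\partial_1$ is the derivation with $\partial_1(x)=xy$, $\partial_1(y)=-xy$. For $c\in\mathbb{Q}$, $\theta^{(c)}$ is the unique $\mathbb{Q}$-linear map with $\theta^{(c)}(x)=\frac12(xz+zx)$, $\theta^{(c)}(y)=\frac12(yz+zy)$ and $\theta^{(c)}(ww')=\theta^{(c)}(w)w'+w\theta^{(c)}(w')+c\,\partial_1(w)H(w')$; $\widehat{\theta}^{(c)}$ is the unique $\mathbb{Q}$-linear map with the same values on $x,y$ and $\widehat{\theta}^{(c)}(ww')=\widehat{\theta}^{(c)}(w)w'+w\widehat{\theta}^{(c)}(w')+c\,H(w)\partial_1(w')$. For $n\ge1$, $\partial_n^{(c)}=\frac{1}{(n-1)!}\mathrm{ad}(\theta^{(c)})^{n-1}(\partial_1)$ and $\widehat{\partial}_n^{(c)}=\frac{1}{(n-1)!}\mathrm{ad}(\widehat{\theta}^{(c)})^{n-1}(\partial_1)$. *)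

(* Defs.v *)
(* The free algebra Q<x,y> is represented by finite formal
   sums (lists of (coefficient, word)); two representations denote the same
   element iff all their coefficients [coef] agree. Words are [seq bool]
   with [false] = x and [true] = y. *)
From HB Require Import structures.
From mathcomp Require Import all_boot all_order all_algebra.
Set Implicit Arguments. Unset Strict Implicit. Unset Printing Implicit Defensive.
Import Order.TTheory GRing.Theory Num.Theory.
Local Open Scope ring_scope.

Definition word := seq bool.
Definition hpoly := seq (rat * word).

Definition coef (s : hpoly) (w : word) : rat := \sum_(p <- s | p.2 == w) p.1.

Definition hadd (s t : hpoly) : hpoly := s ++ t.
Definition hscale (a : rat) (s : hpoly) : hpoly := [seq (a * p.1, p.2) | p <- s].
Definition hopp (s : hpoly) : hpoly := hscale (-1) s.
Definition hmul (s t : hpoly) : hpoly := [seq (p.1 * q.1, p.2 ++ q.2) | p <- s, q <- t].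
Definition hword (w : word) : hpoly := [:: (1, w)].

Definition hx : hpoly := hword [:: false].
Definition hy : hpoly := hword [:: true].
Definition hz : hpoly := hadd hx hy.
Definition hletter (a : bool) : hpoly := hword [:: a].

Definition lin (f : word -> hpoly) (s : hpoly) : hpoly :=
  flatten [seq hscale p.1 (f p.2) | p <- s].

Definition Hw (w : word) : hpoly := [:: ((size w)%:R, w)].
Definition Hop : hpoly -> hpoly := lin Hw.

Definition d1letter (a : bool) : hpoly :=
  if a then [:: (-1, [:: false; true])] else [:: (1, [:: false; true])].
Fixpoint d1w (w : word) : hpoly :=
  match w with
  | [::] => [::]
  | a :: w' => hadd (hmul (d1letter a) (hword w')) (hmul (hletter a) (d1w w'))
  end.
Definition d1 : hpoly -> hpoly := lin d1w.

Definition thetaletter (a : bool) : hpoly :=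
  hscale (1 / 2%:R) (hadd (hmul (hletter a) hz) (hmul hz (hletter a))).

Fixpoint thetaw (c : rat) (w : word) : hpoly :=
  match w with
  | [::] => [::]
  | a :: w' => hadd (hmul (thetaletter a) (hword w'))
                 (hadd (hmul (hletter a) (thetaw c w'))
                       (hscale c (hmul (d1w [:: a]) (Hw w'))))
  end.
Definition theta (c : rat) : hpoly -> hpoly := lin (thetaw c).

Fixpoint thetahatw (c : rat) (w : word) : hpoly :=
  match w with
  | [::] => [::]
  | a :: w' => hadd (hmul (thetaletter a) (hword w'))
                 (hadd (hmul (hletter a) (thetahatw c w'))
                       (hscale c (hmul (Hw [:: a]) (d1w w'))))
  end.
Definition thetahat (c : rat) : hpoly -> hpoly := lin (thetahatw c).

Definition ad (A B : hpoly -> hpoly) : hpoly -> hpoly :=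
  fun s => hadd (A (B s)) (hopp (B (A s))).

Definition dn (c : rat) (n : nat) : hpoly -> hpoly :=
  fun s => hscale ((n.-1)`!%:R)^-1 (iter n.-1 (ad (theta c)) d1 s).
Definition dnhat (c : rat) (n : nat) : hpoly -> hpoly :=
  fun s => hscale ((n.-1)`!%:R)^-1 (iter n.-1 (ad (thetahat c)) d1 s).

(* Main.v *)
Require Import Defs.
From HB Require Import structures.
From mathcomp Require Import all_boot all_order all_algebra.
From Stdlib Require Import FunctionalExtensionality Ring Field.
Set Implicit Arguments. Unset Strict Implicit. Unset Printing Implicit Defensive.
Import Order.TTheory GRing.Theory Num.Theory.
Local Open Scope ring_scope.

Definition qadd (x y : rat) : rat := x + y.
Definition qmul (x y : rat) : rat := x * y.
Definition qopp (x : rat) : rat := - x.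
Definition qinv (x : rat) : rat := x^-1.
Definition q0 : rat := 0.
Definition qsub (x y : rat) : rat := qadd x (qopp y).
Definition qdiv (x y : rat) : rat := qmul x (qinv y).
Definition q1 : rat := 1.
Lemma q_ring_theory : @ring_theory rat q0 q1 qadd qmul qsub qopp eq.
Proof.
rewrite /qsub /qadd /qmul /qopp /q0 /q1.
split=> //=; [exact: add0r|exact: addrC|exact: addrA|exact: mul1r|exact: mulrC|exact: mulrA|exact: mulrDl|exact: subrr].
Qed.
Lemma q_field_theory : @field_theory rat q0 q1 qadd qmul qsub qopp qdiv qinv eq.
Proof.
split=> //=; first exact: q_ring_theory.
by move=> p Hp; rewrite /qmul /qinv mulVf //; apply/eqP.
Qed.
Add Field qField : q_field_theory.
Lemma qaddE (x y : rat) : x + y = qadd x y. Proof. by []. Qed.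
Lemma qmulE (x y : rat) : x * y = qmul x y. Proof. by []. Qed.
Lemma qoppE (x : rat) : - x = qopp x. Proof. by []. Qed.
Lemma qinvE (x : rat) : x^-1 = qinv x. Proof. by []. Qed.
Lemma q0E : 0 = q0 :> rat. Proof. by []. Qed.
Lemma q1E : 1 = q1 :> rat. Proof. by []. Qed.
Definition qnat (n : nat) : rat := n%:R.
Lemma qnatE n : n%:R = qnat n. Proof. by []. Qed.
Ltac qgen := repeat match goal with |- context [bigop.body ?i ?r ?F] =>
  let x := fresh "S" in have [x ->] : exists x : rat, bigop.body i r F = x by eexists end.
Ltac qprep := qgen; rewrite ?mulrS ?mulr0n ?qnatE; rewrite ?qaddE ?qmulE ?qoppE ?qinvE ?q0E ?q1E;
  match goal with |- ?x = ?y => change (@eq rat x y) end.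
Ltac qring := qprep; ring.

Definition fn := seq nat -> rat.

Fixpoint Prex (f : fn) (a : seq nat) : rat :=
  match a with
  | [::] => 0
  | 0%N :: a' => Prex f a'
  | m.+1 :: b => f (m :: b)
  end.
Definition Prey (f : fn) (a : seq nat) : rat :=
  match a with 0%N :: a' => - Prex f a' | _ => 0 end.
Definition Pre (l : bool) (f : fn) : fn := if l then Prey f else Prex f.
Definition Zop (f : fn) (a : seq nat) : rat :=
  match a with m.+1 :: b => f (m :: b) | _ => 0 end.

Fixpoint psi (w : word) : fn :=
  match w with
  | [::] => fun a => (a == [:: 0%N])%:R
  | l :: w' => Pre l (psi w')
  end.

Definition G (s : hpoly) : fn := fun a => \sum_(q <- s) q.1 * psi q.2 a.

Lemma Prex_lin (I : Type) (s : seq I) (c : I -> rat) (F : I -> fn) a :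
  Prex (fun b => \sum_(j <- s) c j * F j b) a = \sum_(j <- s) c j * Prex (F j) a.
Proof.
elim: a => [|x a IH] /=; first by rewrite big1 // => j _; rewrite mulr0.
by case: x.
Qed.

Lemma Pre_lin l (I : Type) (s : seq I) (c : I -> rat) (F : I -> fn) a :
  Pre l (fun b => \sum_(j <- s) c j * F j b) a = \sum_(j <- s) c j * Pre l (F j) a.
Proof.
case: l => /=; last exact: Prex_lin.
case: a => [|[|x] a] /=; try by rewrite big1 // => j _; rewrite mulr0.
rewrite Prex_lin -sumrN; apply: eq_bigr => j _; by rewrite mulrN.
Qed.

Lemma Pre_scale l (c : rat) (F : fn) a :
  Pre l (fun b => c * F b) a = c * Pre l F a.
Proof.
have := Pre_lin l [:: tt] (fun _ => c) (fun _ => F) a.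
rewrite big_seq1 => <-; congr Pre; apply: functional_extensionality => b.
by rewrite big_seq1.
Qed.

Lemma Pre_add l (F1 F2 : fn) a :
  Pre l (fun b => F1 b + F2 b) a = Pre l F1 a + Pre l F2 a.
Proof.
have := Pre_lin l [:: true; false] (fun _ => 1) (fun j => if j then F1 else F2) a.
rewrite !big_cons !big_nil !mul1r !addr0 => <-; congr Pre.
by apply: functional_extensionality => b; rewrite !big_cons !big_nil !mul1r addr0.
Qed.

Lemma G_cat s t a : G (s ++ t) a = G s a + G t a.
Proof. by rewrite /G big_cat. Qed.

Lemma G_hadd s t : G (hadd s t) = fun a => G s a + G t a.
Proof. apply: functional_extensionality => a; exact: G_cat. Qed.

Lemma G_hscale k s : G (hscale k s) = fun a => k * G s a.
Proof.
apply: functional_extensionality => a.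
rewrite /G /hscale big_map mulr_sumr; apply: eq_bigr => q _ /=; by rewrite mulrA.
Qed.

Lemma G_nil : G [::] = fun _ => 0.
Proof. by apply: functional_extensionality => a; rewrite /G big_nil. Qed.

Fixpoint PreW (w : word) (f : fn) : fn :=
  match w with [::] => f | l :: w' => Pre l (PreW w' f) end.

Lemma psi_cat u v : psi (u ++ v) = PreW u (psi v).
Proof. by elim: u => //= l u ->. Qed.

Lemma PreW_lin w (I : Type) (s : seq I) (c : I -> rat) (F : I -> fn) a :
  PreW w (fun b => \sum_(j <- s) c j * F j b) a = \sum_(j <- s) c j * PreW w (F j) a.
Proof.
elim: w a => //= l w IH a.
have -> : PreW w (fun b => \sum_(j <- s) c j * F j b) = 
   (fun b => \sum_(j <- s) c j * PreW w (F j) b).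
  by apply: functional_extensionality => b; rewrite IH.
exact: Pre_lin.
Qed.

Lemma G_hmul p q : G (hmul p q) = fun a => \sum_(u <- p) u.1 * PreW u.2 (G q) a.
Proof.
apply: functional_extensionality => a.
rewrite /G /hmul big_allpairs_dep; apply: eq_bigr => u _.
rewrite PreW_lin mulr_sumr; apply: eq_bigr => v _ /=.
by rewrite psi_cat mulrA.
Qed.

Lemma G_hword w : G (hword w) = psi w.
Proof. by apply: functional_extensionality => a; rewrite /G /hword big_seq1 mul1r. Qed.

Lemma G_lin f s : G (lin f s) = fun a => \sum_(q <- s) q.1 * G (f q.2) a.
Proof.
apply: functional_extensionality => a.
rewrite /G /lin big_flatten big_map /=; apply: eq_bigr => q _.
rewrite /hscale big_map mulr_sumr; apply: eq_bigr => u _ /=; by rewrite mulrA.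
Qed.

Ltac qfield := qprep; field; rewrite /qadd /q1 /q0 /qopp /qmul; by [].

Fixpoint dec (i : nat) (a : seq nat) : seq nat :=
  match a with
  | [::] => [::]
  | x :: a' => if i is i'.+1 then x :: dec i' a' else x.-1 :: a'
  end.

Definition Th (k : nat -> seq nat -> rat) (f : fn) : fn :=
  fun a => \sum_(i <- iota 0 (size a))
             (if (0 < nth 0%N a i)%N then k i a * f (dec i a) else 0).

Lemma size_dec i a : size (dec i a) = size a.
Proof. by elim: a i => [|x a IH] [|i] //=; rewrite IH. Qed.

Lemma Th_nil k f : Th k f [::] = 0.
Proof. by rewrite /Th big_nil. Qed.

Lemma sum_iota1 n (F : nat -> rat) :
  \sum_(i <- iota 1 n) F i = \sum_(i <- iota 0 n) F i.+1.
Proof. by rewrite (iotaDl 1 0) big_map. Qed.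

Lemma ThE k f x a : Th k f (x :: a) =
  (if (0 < x)%N then k 0%N (x :: a) * f (x.-1 :: a) else 0) +
  \sum_(i <- iota 0 (size a))
     (if (0 < nth 0%N a i)%N then k i.+1 (x :: a) * f (x :: dec i a) else 0).
Proof. by rewrite /Th /= big_cons sum_iota1. Qed.

Lemma Th_lin k (I : Type) (s : seq I) (c : I -> rat) (F : I -> fn) a :
  Th k (fun b => \sum_(j <- s) c j * F j b) a = \sum_(j <- s) c j * Th k (F j) a.
Proof.
rewrite /Th.
transitivity (\sum_(i <- iota 0 (size a)) \sum_(j <- s)
   (if (0 < nth 0%N a i)%N then k i a * (c j * F j (dec i a)) else 0)).
  apply: eq_bigr => i _; case: ifP => _; [by rewrite mulr_sumr | by rewrite big1].
rewrite exchange_big; apply: eq_bigr => j _; rewrite mulr_sumr; apply: eq_bigr => i _.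
by case: ifP => _; [qring | rewrite mulr0].
Qed.

Lemma Th_scale k c f a : Th k (fun b => c * f b) a = c * Th k f a.
Proof.
have := Th_lin k [:: tt] (fun _ => c) (fun _ => f) a.
rewrite big_seq1 => <-; congr Th; apply: functional_extensionality => b.
by rewrite big_seq1.
Qed.

Lemma Th_addk k1 k2 c f a :
  Th (fun i b => k1 i b + c * k2 i b) f a = Th k1 f a + c * Th k2 f a.
Proof.
rewrite /Th mulr_sumr -big_split /=; apply: eq_bigr => i _.
by case: ifP => _; [qring | rewrite mulr0 addr0].
Qed.

Lemma ThS k B f a : (forall i a', k i.+1 (0%N :: a') = k i a' - (i == 0%N)%:R * B) ->
  Th k f (0%N :: a) = Th k (fun b => f (0%N :: b)) a - B * Zop (fun b => f (0%N :: b)) a.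
Proof.
move=> HS; rewrite ThE /= add0r.
case: a => [|x a]; first by rewrite /Th /= !big_nil mulr0 subr0.
rewrite ThE /= big_cons sum_iota1 /= HS /=.
under eq_bigr => i _ do rewrite HS /= mul0r subr0.
case: x => [|x] /=; first by rewrite mulr0 subr0.
qring.
Qed.

Lemma Pre0 l g a : Pre l g (0%N :: a) = (if l then -1 else 1) * Prex g a.
Proof. by case: l => /=; rewrite ?mulN1r ?mul1r. Qed.

Lemma comm_gen k B (R : bool -> fn -> fn) :
 (forall i a', k i.+1 (0%N :: a') = k i a' - (i == 0%N)%:R * B) ->
 (forall l f, R l f [::] = 0) ->
 (forall l f a', R l f (0%N :: a') = (if l then -1 else 1) * (R false f a' - B * Zop (Prex f) a')) ->
 (forall l f m b, Th k (Pre l f) (m.+1 :: b) - Pre l (Th k f) (m.+1 :: b) = R l f (m.+1 :: b)) ->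
 forall l f a, Th k (Pre l f) a - Pre l (Th k f) a = R l f a.
Proof.
move=> HS Hn H0 Hp l f a; elim: a l => [|x a IH] l.
  by rewrite Th_nil Hn; case: l => /=; rewrite subrr.
case: x => [|m]; last exact: Hp.
rewrite (@ThS k B (Pre l f) a HS) Pre0 H0 -(IH false) /=.
have -> : (fun b => Pre l f (0%N :: b)) = (fun b => (if l then -1 else 1) * Prex f b).
  by apply: functional_extensionality => b; rewrite Pre0.
rewrite Th_scale.
have -> : Zop (fun b => (if l then -1 else 1) * Prex f b) a = (if l then -1 else 1) * Zop (Prex f) a.
  by case: a {IH} => [|[|y] a] /=; rewrite ?mulr0.
case: l; qring.
Qed.

Lemma Hp_helper k l f m b : Th k (Pre l f) (m.+1 :: b) - Pre l (Th k f) (m.+1 :: b) =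
  if l then k 0%N (m.+1::b) * Prey f (m :: b)
  else k 0%N (m.+1::b) * Prex f (m::b) - (if (0<m)%N then k 0%N (m::b) * f (m.-1::b) else 0)
     + \sum_(i <- iota 0 (size b)) (if (0 < nth 0%N b i)%N then
          (k i.+1 (m.+1::b) - k i.+1 (m::b)) * f (m :: dec i b) else 0).
Proof.
rewrite ThE /=; case: l => /=.
  rewrite big1 => [|i _]; last by case: ifP => _; rewrite ?mulr0.
  by rewrite addr0 subr0.
rewrite ThE.
have -> : \sum_(i <- iota 0 (size b)) (if (0 < nth 0%N b i)%N then
          (k i.+1 (m.+1::b) - k i.+1 (m::b)) * f (m :: dec i b) else 0) =
  \sum_(i <- iota 0 (size b)) (if (0 < nth 0%N b i)%N then k i.+1 (m.+1::b) * f (m :: dec i b) else 0)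
 - \sum_(i <- iota 0 (size b)) (if (0 < nth 0%N b i)%N then k i.+1 (m::b) * f (m :: dec i b) else 0).
  by rewrite -sumrB; apply: eq_bigr => i _; case: ifP => _; [qring | rewrite subrr].
by case: m => [|m] /=; qring.
Qed.

Definition k0 (i : nat) (a : seq nat) : rat :=
  (nth 0%N a i)%:R - 1 + (i == 0%N)%:R / 2%:R - (i.+1 == size a)%:R / 2%:R.
Definition kE (i : nat) (a : seq nat) : rat :=
  (i.+1 < size a)%N%:R * (1 - (sumn (drop i.+1 a))%:R).
Definition kEh (i : nat) (a : seq nat) : rat :=
  - ((i.+1 < size a)%N%:R * ((sumn (take i a))%:R + (nth 0%N a i)%:R - 1)).
Definition kD (i : nat) (a : seq nat) : rat := - (i.+1 < size a)%N%:R.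

Definition Htil (f : fn) : fn := fun a => (sumn a)%:R * f a.
Definition R0 (l : bool) (f : fn) : fn := fun a => (Pre l (Zop f) a + Zop (Pre l f) a) / 2%:R.
Definition RE (l : bool) (f : fn) : fn := fun a => (if l then -1 else 1) * Prex (Prey (Htil f)) a.
Definition REh (l : bool) (f : fn) : fn := fun a => Pre l (Th kD f) a.
Definition RD (l : bool) (f : fn) : fn := fun a => (if l then -1 else 1) * Prex (Prey f) a.

Lemma PrexH f b : Prex (Htil f) b = ((sumn b)%:R - 1) * Prex f b.
Proof.
elim: b => [|x b IH] /=; first by rewrite mulr0.
case: x => [|x] /=; first by rewrite add0n.
rewrite /Htil /= !natrD; qring.
Qed.

Lemma comm_k0 l f a : Th k0 (Pre l f) a - Pre l (Th k0 f) a = R0 l f a.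
Proof.
apply: (@comm_gen k0 (1 / 2%:R)) => {l f a}.
- move=> i a'; rewrite /k0 /=; case: i => [|i] /=; qfield.
- by move=> [] f; rewrite /R0 /= addr0 mul0r.
- move=> l f a'; rewrite /R0 Pre0 /=; case: l; qfield.
move=> l f m b; rewrite Hp_helper.
rewrite big1 => [|i _]; last by case: ifP => _ //; rewrite /k0 /= subrr mul0r.
rewrite /R0 /k0 /=.
case: l => /=; case: m => [|m] /=; case: b => [|x b] /=; try qfield.
Qed.

Lemma comm_kE l f a : Th kE (Pre l f) a - Pre l (Th kE f) a = RE l f a.
Proof.
apply: (@comm_gen kE 0) => {l f a}.
- by move=> i a'; rewrite /kE /= mulr0 subr0.
- by move=> [] f; rewrite /RE /= mulr0.
- by move=> l f a'; rewrite /RE /=; case: l; qring.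
move=> l f m b; rewrite Hp_helper.
rewrite big1 => [|i _]; last by case: ifP => _ //; rewrite /kE /= subrr mul0r.
rewrite /RE /kE /=.
case: l => /=; case: m => [|m] /=; rewrite ?PrexH;
  (have [->|Hb] := eqVneq b [::]; [by rewrite /=; qring | rewrite ?ltnS ?drop0 ?lt0n ?size_eq0 ?Hb /=; qring]).
Qed.

Lemma comm_kD l f a : Th kD (Pre l f) a - Pre l (Th kD f) a = RD l f a.
Proof.
apply: (@comm_gen kD 0) => {l f a}.
- by move=> i a'; rewrite /kD /= mulr0 subr0.
- by move=> [] f; rewrite /RD /= mulr0.
- by move=> l f a'; rewrite /RD /=; case: l; qring.
move=> l f m b; rewrite Hp_helper.
rewrite big1 => [|i _]; last by case: ifP => _ //; rewrite /kD /= subrr mul0r.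
rewrite /RD /kD /=.
case: l => /=; case: m => [|m] /=;
  (have [->|Hb] := eqVneq b [::]; [by rewrite /=; qring | rewrite ?ltnS ?drop0 ?lt0n ?size_eq0 ?Hb /=; qring]).
Qed.

Lemma comm_kEh l f a : Th kEh (Pre l f) a - Pre l (Th kEh f) a = REh l f a.
Proof.
apply: (@comm_gen kEh 0) => {l f a}.
- by move=> i a'; rewrite /kEh /= add0n mulr0 subr0.
- by move=> [] f; rewrite /REh /=.
- by move=> l f a'; rewrite /REh Pre0 /=; case: l; qring.
move=> l f m b; rewrite Hp_helper.
have Hd : forall i, kEh i.+1 (m.+1::b) - kEh i.+1 (m::b) = kD i.+1 (m::b).
  by move=> i; rewrite /kEh /kD /= !natrD; qring.
under eq_bigr => i _ do rewrite Hd.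
clear Hd.
rewrite /REh /=.
case: l => /=.
  by case: m => [|m] /=; rewrite /kEh /= ?mul0r //; qring.
rewrite ThE; case: m => [|m] /=; rewrite /kEh /kD /=; qring.
Qed.

Lemma Th_psi_nil k a : k 0%N [:: 1%N] = 0 -> Th k (psi [::]) a = 0.
Proof.
move=> Hk; case: a => [|x a]; first exact: Th_nil.
case: a => [|y a].
  by rewrite ThE /= big_nil addr0; case: x => [|[|x]] /=; rewrite ?Hk ?mul0r ?mulr0.
rewrite ThE big1 => [|i _].
  by case: ifP => _; rewrite /psi ?eqseq_cons ?andbF ?mulr0 ?addr0.
case: ifP => _ //; rewrite /psi eqseq_cons.
move: (size_dec i (y :: a)); case: (dec i (y :: a)) => [|z t] //= _.
by rewrite andbF mulr0.
Qed.

Lemma PrexS (g : fn) (s : nat) :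
  (forall a, (sumn a)%:R * g a = s%:R * g a) ->
  forall a, (sumn a)%:R * Prex g a = s.+1%:R * Prex g a.
Proof.
move=> Hg; elim=> [|x a IH] /=; first by rewrite !mulr0.
case: x => [|x] /=; first by rewrite add0n.
have := Hg (x :: a); rewrite /= !natrD => H.
rewrite -addn1 natrD.
have -> : x%:R + 1 + (sumn a)%:R = (x%:R + (sumn a)%:R) + 1 :> rat by qring.
rewrite mulrDl H; qring.
Qed.

Lemma psiH w a : (sumn a)%:R * psi w a = (size w)%:R * psi w a.
Proof.
elim: w a => [|l w IH] a /=.
  by case: eqP => [->|_] /=; rewrite ?mulr0 ?mul0r.
case: l => /=; last exact: PrexS.
case: a => [|[|x] a] //=; rewrite ?mulr0 //.
rewrite !mulrN; congr (- _); exact: PrexS.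
Qed.

Lemma Htil_psi w : Htil (psi w) = fun a => (size w)%:R * psi w a.
Proof. apply: functional_extensionality => a; exact: psiH. Qed.

Lemma ZopE f a : Zop f a = Prex f a + Prey f a.
Proof. by case: a => [|[|x] a] /=; rewrite ?addr0 ?subrr. Qed.

Lemma eq_from_sub (x y z : rat) : x - y = z -> x = z + y.
Proof. by move<-; rewrite subrK. Qed.

Lemma LD w : G (d1w w) = Th kD (psi w).
Proof.
apply: functional_extensionality => a; elim: w a => [|l w IH] a.
  by rewrite /= /G big_nil Th_psi_nil.
have IH' : G (d1w w) = Th kD (psi w) := functional_extensionality _ _ IH.
rewrite /= G_hadd !G_hmul G_hword IH' /hletter /hword !big_seq1 /= mul1r.
rewrite (eq_from_sub (comm_kD l (psi w) a)) /RD.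
by case: l; rewrite /= big_seq1 /=; qring.
Qed.

Definition kth (c : rat) (i : nat) (a : seq nat) : rat := k0 i a + c * kE i a.
Definition kthh (c : rat) (i : nat) (a : seq nat) : rat := k0 i a + c * kEh i a.

Lemma G_Hw w : G (Hw w) = fun a => (size w)%:R * psi w a.
Proof. by apply: functional_extensionality => a; rewrite /G /Hw big_seq1. Qed.

Lemma Zop_fun f : Zop f = fun b => Prex f b + Prey f b.
Proof. apply: functional_extensionality => b; exact: ZopE. Qed.

Lemma Pre_scale_fun l c f : Pre l (fun b => c * f b) = fun b => c * Pre l f b.
Proof. apply: functional_extensionality => b; exact: Pre_scale. Qed.

Lemma Prex_scale_fun c f : Prex (fun b => c * f b) = fun b => c * Prex f b.
Proof. exact: (Pre_scale_fun false). Qed.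
Lemma Prey_scale_fun c f : Prey (fun b => c * f b) = fun b => c * Prey f b.
Proof. exact: (Pre_scale_fun true). Qed.
Lemma Prex_fun f : Pre false f = Prex f. Proof. by []. Qed.

Lemma Th_addk_fun k1 k2 c f :
  Th (fun i b => k1 i b + c * k2 i b) f = fun a => Th k1 f a + c * Th k2 f a.
Proof. apply: functional_extensionality => a; exact: Th_addk. Qed.

Lemma G_hletter l q : G (hmul (hletter l) q) = Pre l (G q).
Proof.
rewrite G_hmul; apply: functional_extensionality => a.
by rewrite /hletter /hword big_seq1 mul1r.
Qed.

Lemma Lth c w : G (thetaw c w) = Th (kth c) (psi w).
Proof.
apply: functional_extensionality => a; elim: w a => [|l w IH] a.
  rewrite /= /G big_nil Th_psi_nil //; rewrite /kth /k0 /kE /=; qfield.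
have IH' := functional_extensionality _ _ IH.
change (G (hadd (hmul (thetaletter l) (hword w)) (hadd (hmul (hletter l) (thetaw c w))
   (hscale c (hmul (d1w [:: l]) (Hw w))))) a = Th (kth c) (Pre l (psi w)) a).
rewrite 2!G_hadd G_hscale G_hletter !G_hmul G_hword IH' G_Hw /=.
rewrite /thetaletter /hscale /hadd /hmul /hletter /hz /hx /hy /hword /=.
rewrite !big_cons !big_nil /=.
rewrite /kth Th_addk (eq_from_sub (comm_k0 l (psi w) a)) (eq_from_sub (comm_kE l (psi w) a)).
rewrite Th_addk_fun Pre_add Pre_scale.
rewrite /R0 /RE Htil_psi Prey_scale_fun Prex_scale_fun Zop_fun Pre_add ZopE.
by case: l; rewrite /= !big_cons big_nil /= Prey_scale_fun Prex_scale_fun; qfield.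
Qed.

Lemma Lthh c w : G (thetahatw c w) = Th (kthh c) (psi w).
Proof.
apply: functional_extensionality => a; elim: w a => [|l w IH] a.
  rewrite /= /G big_nil Th_psi_nil //; rewrite /kthh /k0 /kEh /=; qfield.
have IH' := functional_extensionality _ _ IH.
change (G (hadd (hmul (thetaletter l) (hword w)) (hadd (hmul (hletter l) (thetahatw c w))
   (hscale c (hmul (Hw [:: l]) (d1w w))))) a = Th (kthh c) (Pre l (psi w)) a).
rewrite 2!G_hadd G_hscale G_hletter !G_hmul G_hword IH' LD /=.
rewrite /thetaletter /hscale /hadd /hmul /hletter /hz /hx /hy /hword /=.
rewrite !big_cons !big_nil /=.
rewrite /kthh Th_addk (eq_from_sub (comm_k0 l (psi w) a)) (eq_from_sub (comm_kEh l (psi w) a)).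
rewrite Th_addk_fun Pre_add Pre_scale.
rewrite /R0 /REh Zop_fun Pre_add ZopE.
by case: l; rewrite /=; qfield.
Qed.

Lemma G_d1 s : G (d1 s) = Th kD (G s).
Proof.
rewrite /d1 G_lin; apply: functional_extensionality => a.
under eq_bigr => q _ do rewrite LD.
by rewrite -Th_lin.
Qed.

Lemma G_theta c s : G (theta c s) = Th (kth c) (G s).
Proof.
rewrite /theta G_lin; apply: functional_extensionality => a.
under eq_bigr => q _ do rewrite Lth.
by rewrite -Th_lin.
Qed.

Lemma G_thetahat c s : G (thetahat c s) = Th (kthh c) (G s).
Proof.
rewrite /thetahat G_lin; apply: functional_extensionality => a.
under eq_bigr => q _ do rewrite Lthh.
by rewrite -Th_lin.
Qed.

Fixpoint vle (b a : seq nat) : bool :=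
  match b, a with
  | [::], [::] => true
  | y :: b', x :: a' => (y <= x)%N && vle b' a'
  | _, _ => false
  end.
Fixpoint vsub (a b : seq nat) : seq nat :=
  match a with
  | [::] => [::]
  | x :: a' => (x - head 0%N b)%N :: vsub a' (behead b)
  end.
Fixpoint vinc (b : seq nat) (i : nat) : seq nat :=
  match b with
  | [::] => [::]
  | y :: b' => if i is i'.+1 then y :: vinc b' i' else y.+1 :: b'
  end.

Lemma size_vsub a b : size (vsub a b) = size a.
Proof. by elim: a b => [|x a IH] b //=; rewrite IH. Qed.

Lemma size_vinc b i : size (vinc b i) = size b.
Proof. by elim: b i => [|y b IH] [|i] //=; rewrite IH. Qed.

Lemma vsubC a b b' : vsub (vsub a b) b' = vsub (vsub a b') b.
Proof. by elim: a b b' => [|x a IH] b b' //=; rewrite IH subnAC. Qed.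

Lemma vle_size b a : vle b a -> size b = size a.
Proof. by elim: b a => [|y b IH] [|x a] //= /andP[_ /IH ->]. Qed.

Lemma leq_sub_add (y y' x : nat) : ((y <= x) && (y' <= x - y))%N = (y + y' <= x)%N.
Proof.
case: (leqP y x) => H /=; first by rewrite leq_subRL.
apply/esym/negbTE; rewrite -ltnNge; exact: (leq_trans H (leq_addr _ _)).
Qed.

Lemma vleC a b b' : vle b a && vle b' (vsub a b) = vle b' a && vle b (vsub a b').
Proof.
elim: a b b' => [|x a IH] [|y b] [|y' b'] //=; try by rewrite andbF.
rewrite andbACA leq_sub_add [in RHS]andbACA leq_sub_add addnC; congr (_ && _).
exact: IH.
Qed.

Lemma vsub0 a n : size a = n -> vsub a (nseq n 0%N) = a.
Proof. by elim: a n => [|x a IH] [|n] //= [/IH ->]; rewrite subn0. Qed.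

Lemma vle0 a n : vle (nseq n 0%N) a = (size a == n).
Proof. by elim: a n => [|x a IH] [|n] //=; rewrite IH. Qed.

Lemma V1 a b i : (i < size a)%N ->
  ((0 < nth 0%N a i)%N && vle b (dec i a)) = vle (vinc b i) a.
Proof.
elim: a b i => [|x a IH] b i //= Hi.
case: b => [|y b].
  case: i Hi => [|i] /= Hi; first by rewrite andbF.
  by case: (dec i a); rewrite andbF.
case: i Hi => [|i] /= Hi; first by case: x.
by rewrite -(IH b i Hi) andbCA.
Qed.

Lemma V1' a b i : (i < size a)%N ->
  (vle b a && (0 < nth 0%N (vsub a b) i)%N) = vle (vinc b i) a.
Proof.
elim: a b i => [|x a IH] b i //= Hi.
case: b => [|y b] /=; first by [].
case: i Hi => [|i] /= Hi.
  rewrite subn_gt0; case: (ltnP y x) => H; last by rewrite andbF.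
  by rewrite (ltnW H) andbT.
by rewrite -(IH b i Hi) andbA.
Qed.

Lemma V2 a b i : size b = size a -> vsub (dec i a) b = vsub a (vinc b i).
Proof.
elim: a b i => [|x a IH] [|y b] [|i] //= [Hs]; first by rewrite -subn1 -subnDA add1n.
by rewrite IH.
Qed.

Lemma V2' a b i : size b = size a -> dec i (vsub a b) = vsub a (vinc b i).
Proof.
elim: a b i => [|x a IH] [|y b] [|i] //= [Hs]; first by rewrite subnS.
by rewrite IH.
Qed.

Definition Mop (F : nat -> seq (rat * seq nat)) (phi : fn) : fn :=
  fun a => \sum_(q <- F (size a)) (if vle q.2 a then q.1 * phi (vsub a q.2) else 0).

Definition VF (mu : nat -> seq nat -> rat) (F : nat -> seq (rat * seq nat)) (s : nat) :=
  flatten [seq [seq (q.1 * mu i q.2, vinc q.2 i) | i <- iota 0 s] | q <- F s].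

Lemma Mop_scale F c phi a : Mop F (fun b => c * phi b) a = c * Mop F phi a.
Proof.
rewrite /Mop mulr_sumr; apply: eq_bigr => q _.
by case: ifP => _; [qring | rewrite mulr0].
Qed.

Lemma Mop_comm F1 F2 phi a : Mop F1 (Mop F2 phi) a = Mop F2 (Mop F1 phi) a.
Proof.
rewrite /Mop.
transitivity (\sum_(q <- F1 (size a)) \sum_(q' <- F2 (size a))
  (if vle q.2 a && vle q'.2 (vsub a q.2) then q.1 * q'.1 * phi (vsub (vsub a q.2) q'.2) else 0)).
  apply: eq_bigr => q _; rewrite size_vsub; case: ifP => H /=.
    rewrite mulr_sumr; apply: eq_bigr => q' _; case: ifP => _; [qring | by rewrite mulr0].
  by rewrite big1.
rewrite exchange_big; apply: eq_bigr => q' _.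
transitivity (\sum_(q <- F1 (size a))
  (if vle q'.2 a && vle q.2 (vsub a q'.2) then q'.1 * (q.1 * phi (vsub (vsub a q'.2) q.2)) else 0)).
  apply: eq_bigr => q _; rewrite vleC vsubC; case: ifP => _ //; qring.
rewrite size_vsub; case: ifP => H /=.
  by rewrite mulr_sumr; apply: eq_bigr => q _; case: ifP => _; rewrite ?mulr0.
by rewrite big1.
Qed.

Lemma Th_M k mu F phi a :
  (forall i b a, (i < size a)%N -> vle (vinc b i) a -> k i a - k i (vsub a b) = mu i b) ->
  Th k (Mop F phi) a - Mop F (Th k phi) a = Mop (VF mu F) phi a.
Proof.
move=> Hk.
have E1 : Th k (Mop F phi) a = \sum_(i <- iota 0 (size a)) \sum_(q <- F (size a))
   (if vle (vinc q.2 i) a then k i a * (q.1 * phi (vsub a (vinc q.2 i))) else 0).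
  rewrite /Th /Mop big_seq [in RHS]big_seq; apply: eq_bigr => i; rewrite mem_iota add0n => /andP[_ Hi].
  rewrite size_dec; case: ifP => Ha.
    rewrite mulr_sumr; apply: eq_bigr => q _; rewrite -(V1 q.2 Hi) Ha /=.
    case: ifP => Hv; last by rewrite mulr0.
    rewrite V2 //; move/vle_size: Hv; by rewrite size_dec.
  by symmetry; apply: big1 => q _; rewrite -(V1 q.2 Hi) Ha.
have E2 : Mop F (Th k phi) a = \sum_(i <- iota 0 (size a)) \sum_(q <- F (size a))
   (if vle (vinc q.2 i) a then q.1 * (k i (vsub a q.2) * phi (vsub a (vinc q.2 i))) else 0).
  rewrite exchange_big /Mop /Th; apply: eq_bigr => q _; rewrite size_vsub.
  case: ifP => Hv.
    rewrite mulr_sumr big_seq [in RHS]big_seq; apply: eq_bigr => i; rewrite mem_iota add0n => /andP[_ Hi].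
    rewrite -(V1' q.2 Hi) Hv /=; case: ifP => _; last by rewrite mulr0.
    by rewrite V2' // (vle_size Hv).
  symmetry; rewrite big_seq; apply: big1 => i; rewrite mem_iota add0n => /andP[_ Hi].
  by rewrite -(V1' q.2 Hi) Hv.
have E3 : Mop (VF mu F) phi a = \sum_(i <- iota 0 (size a)) \sum_(q <- F (size a))
   (if vle (vinc q.2 i) a then q.1 * mu i q.2 * phi (vsub a (vinc q.2 i)) else 0).
  rewrite /Mop /VF big_flatten /= big_map exchange_big /=; apply: eq_bigr => q _.
  by rewrite big_map.
rewrite E1 E2 E3 -sumrB big_seq [in RHS]big_seq; apply: eq_bigr => i.
rewrite mem_iota add0n => /andP[_ Hi].
rewrite -sumrB; apply: eq_bigr => q _; case: ifP => Hv; last by rewrite subrr.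
rewrite -(Hk i q.2 a Hi Hv); qring.
Qed.

Definition dF (s : nat) : seq (rat * seq nat) :=
  [seq (- (j.+1 < s)%N%:R, vinc (nseq s 0%N) j) | j <- iota 0 s].

Lemma ThD_M phi a : Th kD phi a = Mop dF phi a.
Proof.
rewrite /Th /Mop /dF big_map big_seq [in RHS]big_seq; apply: eq_bigr => j.
rewrite mem_iota add0n => /andP[_ Hj] /=.
have Hv : vle (vinc (nseq (size a) 0%N) j) a = (0 < nth 0%N a j)%N.
  by rewrite -(V1 _ Hj) vle0 size_dec eqxx andbT.
rewrite Hv; case: ifP => _ //.
by rewrite -V2 ?size_nseq // vsub0 ?size_dec.
Qed.

Lemma nth_vsub a b i : nth 0%N (vsub a b) i = (nth 0%N a i - nth 0%N b i)%N.
Proof.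
elim: a b i => [|x a IH] b i /=; first by rewrite !nth_nil.
case: b => [|y b]; case: i => [|i] /=; rewrite ?IH ?nth_nil ?subn0 //.
Qed.

Lemma vle_nth b a i : vle b a -> (nth 0%N b i <= nth 0%N a i)%N.
Proof.
elim: b a i => [|y b IH] [|x a] i //=; rewrite ?nth_nil //.
by case/andP=> H1 H2; case: i => [|i] //=; exact: IH.
Qed.

Lemma drop_vsub j a b : drop j (vsub a b) = vsub (drop j a) (drop j b).
Proof.
elim: j a b => [|j IH] a b; first by rewrite !drop0.
case: a => [|x a] //=; rewrite IH; by case: b.
Qed.

Lemma take_vsub j a b : take j (vsub a b) = vsub (take j a) (take j b).
Proof.
elim: j a b => [|j IH] a b; first by rewrite !take0.
case: a => [|x a] //=; rewrite IH; by case: b.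
Qed.

Lemma vle_drop j b a : vle b a -> vle (drop j b) (drop j a).
Proof.
elim: j b a => [|j IH] b a; first by rewrite !drop0.
by case: b => [|y b]; case: a => [|x a] //= /andP[_ /IH].
Qed.

Lemma vle_take j b a : vle b a -> vle (take j b) (take j a).
Proof.
elim: j b a => [|j IH] b a; first by rewrite !take0.
by case: b => [|y b]; case: a => [|x a] //= /andP[-> /IH].
Qed.

Lemma sumn_vsub b a : vle b a -> (sumn (vsub a b))%:R = (sumn a)%:R - (sumn b)%:R :> rat.
Proof.
elim: b a => [|y b IH] [|x a] //=.
case/andP=> H1 H2; rewrite !natrD natrB // IH //; qring.
Qed.

Definition muth (c : rat) (i : nat) (b : seq nat) : rat :=
  (nth 0%N b i)%:R - c * (i.+1 < size b)%N%:R * (sumn (drop i.+1 b))%:R.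
Definition muthh (c : rat) (i : nat) (b : seq nat) : rat :=
  (nth 0%N b i)%:R - c * (i.+1 < size b)%N%:R * ((sumn (take i b))%:R + (nth 0%N b i)%:R).

Lemma Hk_th c i b a : (i < size a)%N -> vle (vinc b i) a ->
  kth c i a - kth c i (vsub a b) = muth c i b.
Proof.
move=> Hi Hv; have Hb : vle b a by move: Hv; rewrite -(V1' _ Hi) => /andP[].
have Hs := vle_size Hb.
rewrite /kth /k0 /kE /muth size_vsub nth_vsub drop_vsub sumn_vsub ?vle_drop //.
rewrite natrB ?vle_nth // Hs; qring.
Qed.

Lemma Hk_thh c i b a : (i < size a)%N -> vle (vinc b i) a ->
  kthh c i a - kthh c i (vsub a b) = muthh c i b.
Proof.
move=> Hi Hv; have Hb : vle b a by move: Hv; rewrite -(V1' _ Hi) => /andP[].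
have Hs := vle_size Hb.
rewrite /kthh /k0 /kEh /muthh size_vsub nth_vsub take_vsub sumn_vsub ?vle_take //.
rewrite natrB ?vle_nth // Hs; qring.
Qed.

Definition adF (A B : fn -> fn) : fn -> fn := fun phi a => A (B phi) a - B (A phi) a.

Fixpoint FK (mu : nat -> seq nat -> rat) (n : nat) : nat -> seq (rat * seq nat) :=
  if n is n'.+1 then VF mu (FK mu n') else dF.

Lemma iter_M k mu :
  (forall i b a, (i < size a)%N -> vle (vinc b i) a -> k i a - k i (vsub a b) = mu i b) ->
  forall n phi, iter n (adF (Th k)) (Th kD) phi = Mop (FK mu n) phi.
Proof.
move=> Hk; elim=> [|n IH] phi /=; apply: functional_extensionality => a.
  exact: ThD_M.
by rewrite /adF !IH (Th_M _ _ _ Hk).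
Qed.

Lemma G_iter (T : hpoly -> hpoly) (Tt : fn -> fn) n :
  (forall s, G (T s) = Tt (G s)) ->
  forall s, G (iter n (ad T) d1 s) = iter n (adF Tt) (Th kD) (G s).
Proof.
move=> HT; elim: n => [|n IH] s /=; first exact: G_d1.
rewrite /ad G_hadd /hopp G_hscale; apply: functional_extensionality => a.
by rewrite HT !IH HT /adF mulN1r.
Qed.

Fixpoint gv (w : word) : seq nat :=
  match w with
  | [::] => [:: 0%N]
  | l :: w' => let g := gv w' in
     if l then 0%N :: (head 0%N g).+1 :: behead g else (head 0%N g).+1 :: behead g
  end.

Lemma gv_cons w : gv w = head 0%N (gv w) :: behead (gv w).
Proof. by case: w => [|[] w]. Qed.

Definition strip (l : bool) (p : hpoly) : hpoly :=
  [seq (q.1, behead q.2) | q <- p & (q.2 != [::]) && (head false q.2 == l)].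

Lemma coef_strip l p w : coef (strip l p) w = coef p (l :: w).
Proof.
rewrite /coef /strip big_map big_filter_cond /=; apply: eq_bigl => q.
by case: q => c [|l' u] //=; rewrite eqseq_cons.
Qed.

Lemma G_strip l p a : G (strip l p) a =
  \sum_(q <- p) (if (q.2 != [::]) && (head false q.2 == l) then q.1 * psi (behead q.2) a else 0).
Proof. by rewrite /G /strip big_map big_filter big_mkcond. Qed.

Lemma psi_gvx u w : psi u (gv (false :: w)) =
  if u is l :: u' then (if l then 0 else psi u' (gv w)) else 0.
Proof.
rewrite /= [in RHS](gv_cons w); case: u => [|[] u] //=.
Qed.

Lemma psi_gvy u w : psi u (gv (true :: w)) =
  if u is l :: u' then (if l then - psi u' (gv w) else psi u' (gv w)) else 0.
Proof.
rewrite /= [in RHS](gv_cons w); case: u => [|[] u] //=.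
Qed.

Lemma G_gv0 p : G p [:: 0%N] = coef p [::].
Proof.
rewrite /G /coef [in RHS]big_mkcond; apply: eq_bigr => q _.
by case: q => c [|[] u] /=; rewrite ?mulr1 ?mulr0.
Qed.

Lemma G_gvx p w : G p (gv (false :: w)) = G (strip false p) (gv w).
Proof.
rewrite G_strip /G; apply: eq_bigr => q _; rewrite psi_gvx.
by case: q => c [|[] u] /=; rewrite ?mulr0.
Qed.

Lemma G_gvy p w : G p (gv (true :: w)) = G (strip false p) (gv w) - G (strip true p) (gv w).
Proof.
rewrite !G_strip /G -sumrB; apply: eq_bigr => q _; rewrite psi_gvy.
by case: q => c [|[] u] /=; rewrite ?mulr0 ?subr0 ?sub0r ?mulrN.
Qed.

Lemma inj_aux w : forall p q, (forall u, G p (gv u) = G q (gv u)) -> coef p w = coef q w.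
Proof.
elim: w => [|l w IH] p q H; first by rewrite -!G_gv0 (H [::]).
rewrite -!coef_strip; apply: IH => u.
have Hx : G (strip false p) (gv u) = G (strip false q) (gv u) by rewrite -!G_gvx.
case: l => //.
have := H (true :: u); rewrite !G_gvy Hx => E.
have -> : G (strip true p) (gv u) =
  G (strip false q) (gv u) - (G (strip false q) (gv u) - G (strip true p) (gv u)) by qring.
rewrite E; qring.
Qed.

Lemma G_inj p q : (forall a, G p a = G q a) -> coef p =1 coef q.
Proof. by move=> H w; apply: inj_aux => u; apply: H. Qed.

Lemma G_dn c n s : G (dn c n s) = fun a => ((n.-1)`!%:R)^-1 * Mop (FK (muth c) n.-1) (G s) a.
Proof.
rewrite /dn G_hscale (G_iter _ (G_theta c)) (iter_M (Hk_th c)).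
by [].
Qed.

Lemma G_dnhat c n s : G (dnhat c n s) = fun a => ((n.-1)`!%:R)^-1 * Mop (FK (muthh c) n.-1) (G s) a.
Proof.
rewrite /dnhat G_hscale (G_iter _ (G_thetahat c)) (iter_M (Hk_thh c)).
by [].
Qed.

Unset Implicit Arguments.
Theorem mainTheorem18 (c c' : rat) (n m : nat) (hn : (1 <= n)%N) (hm : (1 <= m)%N)
  (f : hpoly) :
  coef (dn c n (dnhat c' m f)) =1 coef (dnhat c' m (dn c n f)).
Proof.
apply: G_inj => a.
rewrite !G_dn !G_dnhat !G_dn !Mop_scale Mop_comm; qring.
Qed.
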